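(* Let $G=(V,E)$ be a simple undirected graph on $n$ nodes, let $0<\epsilon<\frac13$, $\delta>0$, $p\in(0,1)$, and let $D\subseteq V$ be an $\epsilon^3$-near clique with $|D|\ge\delta n$; let $C=K_{\epsilon^2}(D)\cap D$. Let $S^{(1)}$ be a random subset of $V$ containing each node independently with probability $p/2$, and let $X^*=S^{(1)}\cap C$. Call $X^*$ representative if (1) $|K_{\epsilon^2}(D)\setminus K_{2\epsilon^2}(X^* )|<\epsilon|C|$ and (2) $|K_{2\epsilon^2}(X^* )\setminus K_{3\epsilon^2}(C)|<\epsilon^2|C|$. Then $\Pr[X^*\text{ is representative}]\ge1-\frac{1}{\epsilon^2\delta}\cdot e^{-\Omega(\epsilon^4\delta pn)}$.
   Context: $\Gamma(v)$ denotes the set of neighbors of $v$. For $Y\subseteq V$ and $0\le\eta\le1$: $K_\eta(Y)=\{v\in V: |\Gamma(v)\cap Y|\ge(1-\eta)|Y|\}$. Each undirected edge is counted as two directed edges; a set $D\subseteq V$ is a $\gamma$-near clique if $|\{(u,v)\in D\times D:\{u,v\}\in E\}|\ge(1-\gamma)|D|(|D|-1)$. $\Omega(\cdot)$ hides an absolute positive constant. *)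

(* Defs.v *)
From HB Require Import structures.
From mathcomp Require Import all_boot all_order all_algebra.
From mathcomp Require Import reals Rstruct sequences exp.
From Stdlib Require Import Rdefinitions.
Set Implicit Arguments. Unset Strict Implicit. Unset Printing Implicit Defensive.
Import Order.TTheory GRing.Theory Num.Theory.
Local Open Scope ring_scope.

Section Defs.
Variable V : finType.

Definition simple_graph (e : rel V) : Prop := symmetric e /\ irreflexive e.

Definition nbhd (e : rel V) (v : V) : {set V} := [set u | e v u].

Definition Kset (e : rel V) (eta : R) (Y : {set V}) : {set V} :=
  [set v | (1 - eta) * (#|Y|%:R : R) <= (#|nbhd e v :&: Y|%:R : R)].

(* number of ordered pairs (u,v) in D x D with {u,v} an edge
   (each undirected edge counted twice) *)
Definition dir_edges (e : rel V) (D : {set V}) : nat :=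
  #|[set uv in setX D D | e uv.1 uv.2]|.

Definition near_clique (e : rel V) (gamma : R) (D : {set V}) : Prop :=
  (1 - gamma) * (#|D|%:R : R) * ((#|D|%:R : R) - 1) <= (dir_edges e D)%:R.

Definition prob_subset (q : R) (P : pred {set V}) : R :=
  \sum_(S : {set V} | P S)
     ((\prod_(v in S) q) * (\prod_(v in ~: S) (1 - q))).

Definition representative (e : rel V) (eps : R) (D C X : {set V}) : bool :=
  ((#|Kset e (eps ^+ 2) D :\: Kset e (2 * eps ^+ 2) X|%:R : R)
      < eps * (#|C|%:R : R)) &&
  ((#|Kset e (2 * eps ^+ 2) X :\: Kset e (3 * eps ^+ 2) C|%:R : R)
      < eps ^+ 2 * (#|C|%:R : R)).
End Defs.

(* Main.v *)
Require Import Defs.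
From HB Require Import structures.
From mathcomp Require Import all_boot all_order all_algebra.
From mathcomp Require Import reals Rstruct sequences exp.
From mathcomp Require Import ring lra.
From Stdlib Require Import Rdefinitions.
Set Implicit Arguments. Unset Strict Implicit. Unset Printing Implicit Defensive.
Import Order.TTheory GRing.Theory Num.Theory.
Local Open Scope ring_scope.

Delimit Scope ring_scope with ring.
Section Prob.
Variable V : finType.
Variable q : R.

Definition wt (S : {set V}) : R :=
  (\prod_(v in S) q) * (\prod_(v in ~: S) (1 - q)).
Definition Ex (g : {set V} -> R) : R := \sum_S wt S * g S.

Lemma wt_ge0 (q0 : 0 <= q) (q1 : q <= 1) S : 0 <= wt S.
Proof.
rewrite /wt; apply: mulr_ge0; apply: prodr_ge0 => v _. all: lra.
Qed.

Lemma prob_Ex (P : pred {set V}) : prob_subset q P = Ex (fun S => (P S)%:R).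
Proof.
rewrite /prob_subset /Ex big_mkcond /=; apply: eq_bigr => S _.
by case: (P S); rewrite ?mulr1 ?mulr0.
Qed.

Lemma Ex_le (q0 : 0 <= q) (q1 : q <= 1) f g : (forall S, f S <= g S) -> Ex f <= Ex g.
Proof.
move=> H; rewrite /Ex; apply: ler_sum => S _; apply: ler_wpM2l; [exact: wt_ge0|exact: H].
Qed.

Lemma Ex_prod (f : V -> R) :
  Ex (fun S => \prod_(v in S) f v) = \prod_v (q * f v + (1 - q)).
Proof.
rewrite bigA_distr /Ex.
apply: eq_bigr => S _.
rewrite [RHS](bigID (fun i => i \in S)) /=.
rewrite /wt -mulrA [X in _ * X]mulrC mulrA.
have -> : (\prod_(v in S) q) * (\prod_(v in S) f v) = \prod_(v in S) (q * f v).
  by rewrite big_split.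
congr (_ * _).
  by apply: eq_bigr => i ->.
rewrite big_mkcond [RHS]big_mkcond /=; apply: eq_bigr => i _.
by rewrite in_setC; case: (i \in S).
Qed.

Lemma Ex1 : Ex (fun _ => 1) = 1.
Proof.
have := Ex_prod (fun _ => 1).
rewrite /Ex => E.
transitivity (\sum_S wt S * (\prod_(v in S) (fun _ : V => 1 : R) v)).
  by apply: eq_bigr => S _; rewrite big1.
by rewrite E big1 // => v _; rewrite mulr1 addrC subrK.
Qed.

Lemma Ex_exp (A : {set V}) (mu : R) :
  Ex (fun S => expR (mu * #|S :&: A|%:R)) = (q * expR mu + (1 - q)) ^+ #|A|.
Proof.
transitivity (Ex (fun S => \prod_(v in S) (if v \in A then expR mu else 1))).
  rewrite /Ex; apply: eq_bigr => S _; congr (_ * _).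
  rewrite -big_mkcondr /= expRM_natr -prodr_const.
  by apply: eq_bigl => v; rewrite in_setI.
rewrite Ex_prod (bigID (fun v => v \in A)) /=.
rewrite [X in _ * X]big1 ?mulr1; last first.
  by move=> v /negbTE ->; rewrite mulr1 addrC subrK.
rewrite -prodr_const; apply: eq_bigr => v ->; done.
Qed.

Lemma Ex_scale (g : {set V} -> R) (k : R) :
  Ex (fun S => g S * k) = Ex g * k.
Proof. by rewrite /Ex big_distrl /=; apply: eq_bigr => S _; rewrite mulrA. Qed.

Lemma chern (q0 : 0 <= q) (q1 : q <= 1) (A : {set V}) (mu b : R)
  (P : pred {set V}) :
  (forall S, P S -> 0 <= mu * #|S :&: A|%:R + b) ->
  prob_subset q P <= expR (b + #|A|%:R * (q * (expR mu - 1))).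
Proof.
move=> H; rewrite prob_Ex.
apply: le_trans (Ex_le q0 q1 (g := fun S => expR (mu * #|S :&: A|%:R) * expR b) _) _.
  move=> S; rewrite -expRD; case: (boolP (P S)) => PS /=.
    have := H S PS; have := expR_ge1Dx (mu * #|S :&: A|%:R + b); lra.
  exact: expR_ge0.
rewrite Ex_scale Ex_exp expRD expRM_natl mulrC.
apply: ler_wpM2l; first exact: expR_ge0.
apply: lerXn2r; rewrite ?nnegrE ?expR_ge0 //.
  have := expR_ge0 mu; nra.
have := expR_ge1Dx (q * (expR mu - 1)); lra.
Qed.

Lemma Ex_add f g : Ex (fun S => f S + g S) = Ex f + Ex g.
Proof. by rewrite /Ex -big_split /=; apply: eq_bigr => S _; rewrite mulrDr. Qed.

Lemma Ex_sub f g : Ex (fun S => f S - g S) = Ex f - Ex g.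
Proof. by rewrite /Ex -sumrB /=; apply: eq_bigr => S _; rewrite mulrBr. Qed.

Lemma Ex_count (K : {set V}) (P : V -> pred {set V}) :
  Ex (fun S => (#|[set v in K | P v S]|%:R : R)) = \sum_(v in K) prob_subset q (P v).
Proof.
have cE : forall S, (#|[set v in K | P v S]|%:R : R) = \sum_(v in K) ((P v S)%:R).
  move=> S; rewrite -sum1_card natr_sum big_mkcond [RHS]big_mkcond /=.
  apply: eq_bigr => v _; rewrite inE.
  by case: (v \in K); case: (P v S).
rewrite /Ex; under eq_bigr => S _ do rewrite cE mulr_sumr.
rewrite exchange_big /=; apply: eq_bigr => v _.
by rewrite prob_Ex.
Qed.

Lemma tail_up (q0 : 0 <= q) (q1 : q <= 1) (A : {set V}) (a mu : R) :
  0 <= mu ->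
  prob_subset q (fun S => a <= (#|S :&: A|%:R : R))
    <= expR (- (mu * a) + #|A|%:R * (q * (expR mu - 1))).
Proof.
move=> m0; apply: chern => // S H; nra.
Qed.

Lemma tail_dn (q0 : 0 <= q) (q1 : q <= 1) (A : {set V}) (a mu : R) :
  0 <= mu ->
  prob_subset q (fun S => (#|S :&: A|%:R : R) <= a)
    <= expR (mu * a + #|A|%:R * (q * (expR (- mu) - 1))).
Proof.
move=> m0; apply: chern => // S H; nra.
Qed.
End Prob.

Lemma expR_up (l : R) : expR l * (1 - l) <= 1.
Proof.
have h1 := expR_ge1Dx (- l); have h2 := expRxMexpNx_1 l; have h3 := expR_ge0 l.
nra.
Qed.

Lemma expR_dn (l : R) : expR (- l) * (1 + l) <= 1.
Proof.
have h1 := expR_ge1Dx l; have h2 := expRxMexpNx_1 l; have h3 := expR_ge0 (- l).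
nra.
Qed.
Section Graph.
Variable V : finType.
Variable e : rel V.

Lemma dir_edges_sum (D : {set V}) :
  dir_edges e D = (\sum_(u in D) #|nbhd e u :&: D|)%N.
Proof.
rewrite /dir_edges -sum1_card.
rewrite (eq_bigl (fun uv : V * V => (uv.1 \in D) && ((uv.2 \in D) && e uv.1 uv.2))); last first.
  by case=> u v; rewrite !inE /= andbA.
rewrite -(pair_big_dep (fun u => u \in D) (fun u v => (v \in D) && e u v) (fun _ _ => 1%N)) /=.
apply: eq_bigr => u _; rewrite sum1_card; apply: eq_card => v.
by rewrite !inE andbC.
Qed.

Lemma edges_le (se : simple_graph e) (eps : R) (D : {set V}) :
  (dir_edges e D)%:R <= #|Kset e (eps ^+ 2) D :&: D|%:R * (#|D|%:R - 1)
      + (#|D|%:R - #|Kset e (eps ^+ 2) D :&: D|%:R) * ((1 - eps ^+ 2) * #|D|%:R).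
Proof.
set C := Kset e (eps ^+ 2) D :&: D; rewrite dir_edges_sum natr_sum (big_setID C) /=.
have DC : D :&: C = C.
  by apply/setP => x; rewrite !inE; case: (x \in D); rewrite ?andbF ?andbT.
have cD : (#|D :&: C| + #|D :\: C|)%N = #|D| by exact: cardsID.
rewrite DC in cD.
have -> : (#|D|%:R : R) - #|C|%:R = #|D :\: C|%:R.
  rewrite -cD natrD; lra.
apply: lerD.
  rewrite DC.
  have -> : (#|C|%:R : R) * (#|D|%:R - 1) = \sum_(i in C) ((#|D|%:R : R) - 1).
    by rewrite sumr_const mulr_natl.
  apply: ler_sum => u uC.
  have uD : u \in D by move: uC; rewrite !inE => /andP[].
  have -> : (#|D|%:R : R) - 1 = #|D :\ u|%:R.
    have h : #|D| = (1 + #|D :\ u|)%N by rewrite (cardsD1 u D) uD.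
    rewrite h natrD; lra.
  rewrite ler_nat; apply: subset_leq_card; apply/subsetP => v.
  rewrite !inE => /andP[euv vD]; rewrite vD andbT.
  apply/eqP => vu; move: euv; rewrite vu.
  by case: se => _ /(_ u) ->.
have -> : (#|D :\: C|%:R : R) * ((1 - eps ^+ 2) * #|D|%:R) = \sum_(i in D :\: C) ((1 - eps ^+ 2) * #|D|%:R).
  by rewrite sumr_const mulr_natl.
apply: ler_sum => u; rewrite !inE => /andP[uC uD].
rewrite uD andbT in uC.
by apply: ltW; rewrite ltNge.
Qed.

Lemma m_bound (se : simple_graph e) (eps : R) (D : {set V}) :
  0 < eps -> eps < 3^-1 -> near_clique e (eps ^+ 3) D ->
  20 <= eps ^+ 2 * #|D|%:R ->
  (37/57) * #|D|%:R <= (#|Kset e (eps ^+ 2) D :&: D|%:R : R).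
Proof.
move=> e0 e3 nc big.
have /= H := edges_le se eps D; move: H nc; rewrite /near_clique.
set C := Kset e (eps ^+ 2) D :&: D.
have mD : (#|C|%:R : R) <= #|D|%:R.
  by rewrite ler_nat; apply: subset_leq_card; apply/subsetP => x; rewrite !inE => /andP[].
move: mD.
set m : R := #|C|%:R; set d : R := #|D|%:R; set E : R := (dir_edges e D)%:R.
move=> mD H nc.
have d0 : 0 <= d by rewrite /d ler0n.
have ee : eps ^+ 3 = eps * eps ^+ 2 by rewrite exprS.
rewrite ee in nc.
set t := eps ^+ 2 in big H nc.
have t0 : 0 < t by rewrite /t exprn_gt0.
have k1 : (19/20) * (d - m) * (t * d) <= eps * t * d * d.
  nra.
have k2 : (19/20) * (d - m) <= eps * d.
  nra.
nra.
Qed.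
End Graph.

Lemma arith_ev1 (q m k a : R) : 0 <= q -> 0 <= m -> 0 <= k -> k <= 1/9 ->
  a * (1 - 1/40) <= 1 ->
  - (1/40 * (21/20 * q * m)) + m * (q * (a - 1)) <= - (1/2000 * (k * q * m)).
Proof.
move=> q0 m0 k0 k9 ha.
have hqm : 0 <= q * m by nra.
have h1 : q * m * (a * (1 - 1/40)) <= q * m by nra.
have h2 : k * (q * m) <= q * m / 9 by nra.
nra.
Qed.

Lemma arith_ev2 (q m k a : R) : 0 <= q -> 0 <= m -> 0 <= k -> k <= 1/9 ->
  a * (1 + 1/40) <= 1 ->
  1/40 * (19/20 * q * m) + m * (q * (a - 1)) <= - (1/2000 * (k * q * m)).
Proof.
move=> q0 m0 k0 k9 ha.
have hqm : 0 <= q * m by nra.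
have h1 : q * m * (a * (1 + 1/40)) <= q * m by nra.
have h2 : k * (q * m) <= q * m / 9 by nra.
nra.
Qed.

Lemma arith_b1 (q m d k b a : R) : 0 <= q -> 0 <= b -> b <= k * d -> 0 <= k ->
  37/57 * d <= m -> 0 <= d -> a * (1 - 1/10) <= 1 -> 1 <= a ->
  - (1/10 * (19/10 * k * q * m)) + b * (q * (a - 1)) <= - (1/2000 * (k * q * m)).
Proof.
move=> q0 b0 bk k0 hm d0 ha a1.
have h0 : 0 <= q * (a - 1) by nra.
have h1 : b * (q * (a - 1)) <= k * d * (q * (a - 1)) by nra.
have h2 : (a - 1) * (1 - 1/10) <= 1/10 by nra.
have h3 : k * d * q * ((a - 1) * (1 - 1/10)) <= k * d * q * (1/10).
  have : 0 <= k * d * q by nra.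
  nra.
have h4 : k * q * d <= k * q * (57/37 * m).
  have : 0 <= k * q by nra.
  nra.
nra.
Qed.

Lemma arith_b2 (q m k b a : R) : 0 <= q -> 0 <= m -> 0 <= k -> 3 * k * m <= b ->
  a * (1 + 1/10) <= 1 -> 0 <= a ->
  1/10 * (21/10 * k * q * m) + b * (q * (a - 1)) <= - (1/2000 * (k * q * m)).
Proof.
move=> q0 m0 k0 hb ha a0.
have a1 : a - 1 <= 0 by lra.
have h0 : q * (a - 1) <= 0 by nra.
have h1 : b * (q * (a - 1)) <= 3 * k * m * (q * (a - 1)).
  move: (q * (a - 1)) h0 => z h0; clear -h0 hb; nra.
have h2 : 3 * k * m * q * (a * (1 + 1/10)) <= 3 * k * m * q.
  have w0 : 0 <= 3 * k * m * q by rewrite !mulr_ge0.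
  move: (3 * k * m * q) w0 => w w0; clear -w0 ha; nra.
have K0 : 0 <= k * q * m by rewrite !mulr_ge0.
lra.
Qed.

Lemma arith_x (k delta p n m : R) : 0 <= k -> k <= 1/9 -> 0 <= delta -> 0 <= p ->
  0 <= n -> delta * n <= 2 * m ->
  9 * (1 / 8000 * (k * k) * delta * p * n) <= 1/2000 * (k * (p * 2^-1) * m).
Proof.
move=> k0 k9 d0 p0 n0 hm.
have A : 0 <= k * delta * p * n by rewrite !mulr_ge0.
have B : k * (k * delta * p * n) <= 1/9 * (k * delta * p * n).
  move: (k * delta * p * n) A => w w0; clear -w0 k9 k0; nra.
have C : 0 <= k * p by rewrite !mulr_ge0.
have D : k * p * (delta * n) <= k * p * (2 * m).
  move: (k * p) C => w w0; clear -w0 hm; nra.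
lra.
Qed.

Lemma exp_five (x : R) : 1 <= x -> 5 * expR (- (9 * x)) <= expR (- x).
Proof.
move=> x1.
have -> : - x = - (9 * x) + 8 * x by lra.
rewrite expRD.
have h1 := expR_ge1Dx (8 * x).
have h2 := expR_ge0 (- (9 * x)).
move: (expR (- (9 * x))) (expR (8 * x)) h1 h2 => A B h1 h2.
nra.
Qed.

Lemma final_comb (E F y n m k1 k2 eps delta : R) :
  0 <= E -> 0 < eps -> eps <= 1 -> 0 < m -> 0 < n -> 0 < delta ->
  k1 * (eps * m) = 1 -> k2 * (eps ^+ 2 * m) = 1 -> y * (eps ^+ 2 * delta) = 1 ->
  delta * n <= 2 * m -> 9 <= y -> 5 * E <= F ->
  E + E + n * E * k1 + n * E * k2 <= y * F.
Proof.
move=> E0 e0 e1 m0 n0 d0 h1 h2 hy hdn y9 EF.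
have em : 0 < eps * m by rewrite mulr_gt0.
have e2 : 0 < eps ^+ 2 by rewrite exprn_gt0.
have k2p : 0 < k2.
  have : 0 < k2 * (eps ^+ 2 * m) by rewrite h2.
  by rewrite pmulr_lgt0 // mulr_gt0.
have k1e : k1 = eps * k2.
  apply: (mulIf (lt0r_neq0 em)).
  by rewrite h1 -h2 expr2; ring.
have k1k2 : k1 <= k2 by rewrite k1e; nra.
have nk : n * k2 <= 2 * y.
  have hyn : n * k2 * (y * (eps ^+ 2 * delta)) = n * k2 by rewrite hy mulr1.
  have h2y : y * (k2 * (eps ^+ 2 * m)) = y by rewrite h2 mulr1.
  have W : 0 <= y * eps ^+ 2 * k2.
    rewrite mulr_ge0 // ?mulr_ge0 ?ltW //; lra.
  have P : (y * eps ^+ 2 * k2) * (delta * n) <= (y * eps ^+ 2 * k2) * (2 * m).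
    by apply: ler_wpM2l.
  lra.
have nE : 0 <= n * E by rewrite mulr_ge0 // ltW.
have Q1 : n * E * k1 <= n * E * k2 by apply: ler_wpM2l.
have Q2 : E * (n * k2) <= E * (2 * y) by apply: ler_wpM2l.
have Q3 : y * (5 * E) <= y * F by apply: ler_wpM2l => //; lra.
have Q4 : E * 2 <= E * y by apply: ler_wpM2l => //; lra.
lra.
Qed.

Lemma expR1_le4 : expR 1 <= 4 :> R.
Proof.
have h : expR (1/2) * (1 - 1/2) <= 1 :> R := expR_up _.
rewrite [X in expR X](splitr 1).
rewrite expRD.
have h0 : 0 <= expR (1/2) :> R := expR_ge0 _.
have h2 : expR (1/2) <= 2 :> R by lra.
nra.
Qed.

Theorem claim5p8 :
  exists c : R, 0 < c /\
  forall (V : finType) (e : rel V), simple_graph e -> (0 < #|V|)%nat ->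
  forall (eps delta p : R),
    0 < eps -> eps < 3^-1 -> 0 < delta -> 0 < p -> p < 1 ->
  forall D : {set V},
    near_clique e (eps ^+ 3) D ->
    delta * (#|V|%:R : R) <= (#|D|%:R : R) ->
    let C := Kset e (eps ^+ 2) D :&: D in
    1 - (eps ^+ 2 * delta)^-1 *
          expR (- (c * eps ^+ 4 * delta * p * (#|V|%:R : R)))
      <= prob_subset (p * 2^-1) (fun S => representative e eps D C (S :&: C)).
Proof.
exists (1/8000); split; first by rewrite divr_gt0.
move=> V e se n0 eps delta p e0 e3 dl0 p0 p1 D nc dn; cbv zeta.
set C := Kset e (eps ^+ 2) D :&: D.
set n : R := #|V|%:R in dn *.
set d : R := #|D|%:R in dn *.
set q := p * 2^-1.
set x := 1 / 8000 * eps ^+ 4 * delta * p * n.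
set y := (eps ^+ 2 * delta)^-1.
have npos : 0 < n by rewrite /n ltr0n.
have dlen : d <= n by rewrite /d /n ler_nat max_card.
have dl1 : delta <= 1 by nra.
have e2 : eps ^+ 2 = eps * eps by rewrite expr2.
have e4 : eps ^+ 4 = eps ^+ 2 * eps ^+ 2 by rewrite -exprD.
have e2p : 0 < eps ^+ 2 by rewrite exprn_gt0.
have e2s : eps ^+ 2 <= 1/9 by rewrite e2; nra.
have t0 : 0 < eps ^+ 2 * delta by nra.
have yt : y * (eps ^+ 2 * delta) = 1 by rewrite /y mulVf // gt_eqF.
have y9 : 9 <= y by nra.
have q0 : 0 <= q by rewrite /q; lra.
have q1 : q <= 1 by rewrite /q; lra.
have pge0 : forall P : pred {set V}, 0 <= prob_subset q P.
  move=> P; rewrite /prob_subset; apply: sumr_ge0 => S _.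
  apply: mulr_ge0; apply: prodr_ge0 => v _; lra.
have hX := expRxMexpNx_1 x.
have hX0 := expR_ge0 (- x).
case: (lerP x 1) => hx.
  have hx4 : expR x <= 4.
    apply: le_trans expR1_le4; by rewrite ler_expR.
  have E4 : 1 <= expR (- x) * 4 by nra.
  have := pge0 (fun S => representative e eps D C (S :&: C)).
  nra.
have xdef : x = 1 / 8000 * (eps ^+ 2 * eps ^+ 2) * delta * p * n by rewrite /x e4.
have dnp : 0 < delta * n by rewrite mulr_gt0.
have d0 : 0 < d by lra.
set k := eps ^+ 2 in e2 e4 e2p e2s t0 yt y9 xdef *.
have big : 20 <= k * d.
  have A : 0 <= k * k * p by rewrite !mulr_ge0 // ltW.
  have B : k * k * p * (delta * n) <= k * k * p * d by apply: ler_wpM2l.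
  have C0 : 0 <= k * k * d by rewrite !mulr_ge0 // ltW.
  have C1 : k * k * d * p <= k * k * d * 1 by apply: ler_wpM2l => //; lra.
  have D1 : k * (k * d) <= 1/9 * (k * d) by apply: ler_wpM2r => //; rewrite mulr_ge0 // ltW.
  lra.
have hm : 37/57 * d <= #|C|%:R by exact: (m_bound se e0 e3 nc big).
set m := (#|C|%:R : R) in hm *.
have mpos : 0 < m by lra.
have hdm : delta * n <= 2 * m by lra.
have k0 : 0 <= k by exact: ltW.
pose T1 := 19/10 * k * q * m.
pose T2 := 21/10 * k * q * m.
pose K1 := Kset e k D.
pose K3c := ~: Kset e (3 * k)%ring C.
pose ev1 := fun S : {set V} => 21/20 * q * m <= #|S :&: C|%:R.
pose ev2 := fun S : {set V} => #|S :&: C|%:R <= 19/20 * q * m.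
pose bad1 := fun v (S : {set V}) => T1 <= #|S :&: (C :\: nbhd e v)|%:R.
pose bad2 := fun v (S : {set V}) => #|S :&: (C :\: nbhd e v)|%:R <= T2.
pose k1 := (eps * m)^-1.
pose k2 := (k * m)^-1.
have k1e : k1 * (eps * m) = 1 by rewrite /k1 mulVf // gt_eqF // mulr_gt0.
have k2e : k2 * (k * m) = 1 by rewrite /k2 mulVf // gt_eqF // mulr_gt0.
have k1p : 0 <= k1 by rewrite /k1 invr_ge0 mulr_ge0 // ltW.
have k2p : 0 <= k2 by rewrite /k2 invr_ge0 mulr_ge0 // ltW.
pose rep := fun S : {set V} => representative e eps D C (S :&: C).
pose E := expR (- (1/2000 * (k * q * m))).
have E0 : 0 <= E by exact: expR_ge0.
have pw : forall S : {set V}, 1 - (rep S)%:R <= (ev1 S)%:R + (ev2 S)%:R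
    + #|[set v in K1 | bad1 v S]|%:R * k1 + #|[set v in K3c | bad2 v S]|%:R * k2.
  move=> S.
  have c1 : 0 <= #|[set v in K1 | bad1 v S]|%:R * k1 by rewrite mulr_ge0.
  have c2 : 0 <= #|[set v in K3c | bad2 v S]|%:R * k2 by rewrite mulr_ge0.
  have i1 : 0 <= (ev1 S)%:R :> R by rewrite ler0n.
  have i2 : 0 <= (ev2 S)%:R :> R by rewrite ler0n.
  case Hr: (rep S); rewrite /= ?mulr1n; first lra.
  case: (boolP (ev1 S)) => h1; first by rewrite h1 /= mulr1n in i1 *; lra.
  case: (boolP (ev2 S)) => h2; first by rewrite h2 /= mulr1n in i2 *; lra.
  rewrite /ev1 -ltNge in h1; rewrite /ev2 -ltNge in h2.
  set X := S :&: C in h1 h2 Hr.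
  have s1 : (#|K1 :\: Kset e (2 * k)%ring X| <= #|[set v in K1 | bad1 v S]|)%nat.
    apply: subset_leq_card; apply/subsetP => v; rewrite in_setD => /andP[nK2 vK1].
    rewrite inE vK1 /= /bad1 setIDA -/X.
    rewrite /Kset inE -ltNge in nK2.
    have ci : (#|X :&: nbhd e v| + #|X :\: nbhd e v|)%nat = #|X| by exact: cardsID.
    have ci' : (#|X :&: nbhd e v|%:R : R) + #|X :\: nbhd e v|%:R = #|X|%:R.
      by rewrite -natrD ci.
    rewrite setIC in nK2.
    have P1 : k * (19/20 * q * m) <= k * #|X|%:R by apply: ler_wpM2l => //; lra.
    rewrite /T1; lra.
  have s2 : (#|Kset e (2 * k)%ring X :\: Kset e (3 * k)%ring C| <= #|[set v in K3c | bad2 v S]|)%nat.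
    apply: subset_leq_card; apply/subsetP => v; rewrite in_setD => /andP[nK3 vK2].
    rewrite inE /K3c in_setC nK3 /= /bad2 setIDA -/X.
    rewrite /Kset inE in vK2.
    have ci : (#|X :&: nbhd e v| + #|X :\: nbhd e v|)%nat = #|X| by exact: cardsID.
    have ci' : (#|X :&: nbhd e v|%:R : R) + #|X :\: nbhd e v|%:R = #|X|%:R.
      by rewrite -natrD ci.
    rewrite setIC in vK2.
    have P1 : k * #|X|%:R <= k * (21/20 * q * m) by apply: ler_wpM2l => //; lra.
    rewrite /T2; lra.
  have s1r : (#|K1 :\: Kset e (2 * k)%ring X|%:R : R) <= #|[set v in K1 | bad1 v S]|%:R by rewrite ler_nat.
  have s2r : (#|Kset e (2 * k)%ring X :\: Kset e (3 * k)%ring C|%:R : R) <= #|[set v in K3c | bad2 v S]|%:R by rewrite ler_nat.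
  move: Hr; rewrite /rep /representative !RealsE /= -/X => /negbT; rewrite negb_and -!leNgt.
  case/orP => H.
    have H' := le_trans H s1r.
    have : eps * m * k1 <= #|[set v in K1 | bad1 v S]|%:R * k1.
      by apply: ler_wpM2r.
    lra.
  have H' := le_trans H s2r.
  have : k * m * k2 <= #|[set v in K3c | bad2 v S]|%:R * k2.
    by apply: ler_wpM2r.
  lra.
have Hle := Ex_le q0 q1 pw.
have L : Ex q (fun S => 1 - (rep S)%:R) = 1 - prob_subset q rep.
  by rewrite (Ex_sub q (fun _ => 1) (fun S => (rep S)%:R)) Ex1 prob_Ex.
rewrite L !Ex_add !Ex_scale !Ex_count -!prob_Ex in Hle.
pose l40 : R := (1/40)%ring.
pose l10 : R := (1/10)%ring.
have l40p : 0 <= l40 by rewrite /l40 divr_ge0.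
have l10p : 0 <= l10 by rewrite /l10 divr_ge0.
have m0 : 0 <= m by exact: ltW.
have pev1 : prob_subset q ev1 <= E.
  apply: le_trans (tail_up q0 q1 C _ l40p) _.
  rewrite /E ler_expR; apply: arith_ev1 => //; exact: expR_up.
have pev2 : prob_subset q ev2 <= E.
  apply: le_trans (tail_dn q0 q1 C _ l40p) _.
  rewrite /E ler_expR; apply: arith_ev2 => //; exact: expR_dn.
have CD : C \subset D by apply/subsetP => z; rewrite /C !inE => /andP[].
have pb1 : forall v, v \in K1 -> prob_subset q (bad1 v) <= E.
  move=> v vK.
  apply: le_trans (tail_up q0 q1 (C :\: nbhd e v) _ l10p) _.
  have bb : (#|C :\: nbhd e v|%:R : R) <= k * d.
    have sub : (#|C :\: nbhd e v| <= #|D :\: nbhd e v|)%nat.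
      by apply: subset_leq_card; apply: setSD.
    have ci : (#|D :&: nbhd e v| + #|D :\: nbhd e v|)%nat = #|D| by exact: cardsID.
    have ci' : (#|D :&: nbhd e v|%:R : R) + #|D :\: nbhd e v|%:R = d.
      by rewrite -natrD ci.
    have sub' : (#|C :\: nbhd e v|%:R : R) <= #|D :\: nbhd e v|%:R by rewrite ler_nat.
    rewrite /K1 /Kset inE setIC in vK.
    lra.
  have a1 : 1 <= expR l10 by have := expR_ge1Dx l10; lra.
  rewrite /E ler_expR.
  exact: (arith_b1 q0 (ler0n _ _) bb k0 hm (ltW d0) (expR_up _) a1).
have pb2 : forall v, v \in K3c -> prob_subset q (bad2 v) <= E.
  move=> v vK.
  apply: le_trans (tail_dn q0 q1 (C :\: nbhd e v) _ l10p) _.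
  have bb : 3 * k * m <= (#|C :\: nbhd e v|%:R : R).
    have ci : (#|C :&: nbhd e v| + #|C :\: nbhd e v|)%nat = #|C| by exact: cardsID.
    have ci' : (#|C :&: nbhd e v|%:R : R) + #|C :\: nbhd e v|%:R = m.
      by rewrite -natrD ci.
    rewrite /K3c in_setC /Kset inE -ltNge setIC in vK.
    lra.
  rewrite /E ler_expR.
  exact: (arith_b2 q0 m0 k0 bb (expR_dn _) (expR_ge0 _)).
have S1 : \sum_(v in K1) prob_subset q (bad1 v) <= n * E.
  apply: le_trans (ler_sum _ pb1) _.
  rewrite sumr_const -mulr_natl; apply: ler_wpM2r => //.
  by rewrite /n ler_nat max_card.
have S2 : \sum_(v in K3c) prob_subset q (bad2 v) <= n * E.
  apply: le_trans (ler_sum _ pb2) _.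
  rewrite sumr_const -mulr_natl; apply: ler_wpM2r => //.
  by rewrite /n ler_nat max_card.
have M1 : (\sum_(v in K1) prob_subset q (bad1 v)) * k1 <= n * E * k1 by apply: ler_wpM2r.
have M2 : (\sum_(v in K3c) prob_subset q (bad2 v)) * k2 <= n * E * k2 by apply: ler_wpM2r.
have E9 : E <= expR (- (9 * x)).
  rewrite /E ler_expR.
  have := arith_x k0 e2s (ltW dl0) (ltW p0) (ltW npos) hdm.
  rewrite -xdef /q; lra.
have fiveE : 5 * E <= expR (- x).
  have := exp_five (ltW hx); lra.
have e1 : eps <= 1 by lra.
have FC := final_comb E0 e0 e1 mpos npos dl0 k1e k2e yt hdm y9 fiveE.
rewrite -/rep.
lra.
Qed.
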